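(* For all positive integers $k,q,m$ with $q<k$ one has $\alpha^k_{q,m}=0$; that is, every M-partition of type $(k,q,m)$ satisfies $q\geqslant k$.
   Context: Let $\mathbb N=\mathbb Z_{\geqslant 0}$ with the componentwise order. For integers $n,d\geqslant 0$, an $(n-1)$-dimensional partition of size $d$ is a subset $\lambda\subset\mathbb N^n$ with $|\lambda|=d$ closed downward for the componentwise order; $\mathrm P^n_d$ is the set of these. The degree of a point is the sum of its coordinates; $\lambda_{=i}$, $\lambda_{\geqslant i}$ are the elements of degree $i$, resp. $\geqslant i$; $h_\lambda(i)=|\lambda_{=i}|$; $\mathrm{Soc}(\lambda)$ is the set of maximal elements of $\lambda$. For positive integers $k,q,m$, an M-partition of type $(k,q,m)$ is a $\lambda\in\mathrm P^k_{1+k+q+m}$ with $\mathrm{Soc}(\lambda)\subset\lambda_{\geqslant 3}$, $h_\lambda(1)=k$, $h_\lambda(2)=q$ and $\sum_{i\geqslant 3}h_\lambda(i)=m$. $\alpha^k_{q,m}$ denotes the number of M-partitions of type $(k,q,m)$. *)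

(* Defs.v *)
From mathcomp Require Import all_boot finmap.
Set Implicit Arguments. Unset Strict Implicit. Unset Printing Implicit Defensive.
Local Open Scope fset_scope.

Definition pt (n : nat) := {ffun 'I_n -> nat}.

Definition ple (n : nat) (x y : pt n) : bool := [forall i, x i <= y i].

Definition deg (n : nat) (x : pt n) : nat := \sum_(i < n) x i.

(* an (n-1)-dimensional partition of size d: a finite downward-closed subset of N^n
   of cardinality d *)
Definition is_partition (n d : nat) (lam : {fset pt n}) : Prop :=
  #|` lam| = d /\ (forall x y : pt n, y \in lam -> ple x y -> x \in lam).

Definition lam_eq (n : nat) (lam : {fset pt n}) (i : nat) : {fset pt n} :=
  [fset x in lam | deg x == i].
Definition lam_ge (n : nat) (lam : {fset pt n}) (i : nat) : {fset pt n} :=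
  [fset x in lam | i <= deg x].
Definition h (n : nat) (lam : {fset pt n}) (i : nat) : nat := #|` lam_eq lam i|.

Definition socle (n : nat) (lam : {fset pt n}) : {fset pt n} :=
  [fset x in lam | [forall y : lam, ple x (val y) ==> (val y == x)]].

(* M-partition of type (k,q,m).  The sum \sum_{i>=3} h_lambda(i) (a finite sum,
   since lambda is finite) equals #|lambda_{>=3}|. *)
Definition is_M_partition (k q m : nat) (lam : {fset pt k}) : Prop :=
  [/\ is_partition (1 + k + q + m) lam,
      socle lam `<=` lam_ge lam 3,
      h lam 1 = k,
      h lam 2 = q &
      #|` lam_ge lam 3| = m].
Arguments is_M_partition k q m lam : clear implicits.

(* Main.v *)
Require Import Defs.
From mathcomp Require Import all_boot finmap zify.
Set Implicit Arguments. Unset Strict Implicit. Unset Printing Implicit Defensive.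
Local Open Scope fset_scope. Local Open Scope nat_scope.

Definition ev k (i : 'I_k) : pt k := [ffun t => nat_of_bool (t == i)].
Definition addp k (x : pt k) (l : 'I_k) : pt k := [ffun t => x t + (t == l)].

Lemma sum_eq1 k (l : 'I_k) : \sum_(t < k) nat_of_bool (t == l) = 1.
Proof. by rewrite (bigD1 l) //= eqxx big1 // => t /negbTE ->. Qed.

Lemma deg_ev k (i : 'I_k) : deg (ev i) = 1.
Proof. rewrite /deg; under eq_bigr do rewrite ffunE; exact: sum_eq1. Qed.

Lemma deg_addp k (x : pt k) l : deg (addp x l) = deg x + 1.
Proof.
rewrite /deg; under eq_bigr do rewrite ffunE.
by rewrite big_split /= sum_eq1.
Qed.

Lemma ple_refl k (x : pt k) : ple x x.
Proof. by apply/forallP=> i. Qed.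

Lemma ple_trans k (x y z : pt k) : ple x y -> ple y z -> ple x z.
Proof.
move=> /forallP H1 /forallP H2; apply/forallP=> i; exact: leq_trans (H1 i) (H2 i).
Qed.

Lemma ple_deg k (x y : pt k) : ple x y -> deg x <= deg y.
Proof. move=> /forallP H; exact: leq_sum. Qed.

Lemma ple_lt_deg k (x y : pt k) : ple x y -> x != y -> deg x < deg y.
Proof.
move=> /forallP H neq.
have [i Hi] : exists i, x i != y i.
  apply/existsP; apply: contraR neq; rewrite negb_exists => /forallP Hx.
  apply/eqP/ffunP => i; exact/eqP/negPn/Hx.
rewrite /deg (bigD1 i) //= [X in _ < X](bigD1 i) //=.
rewrite -addSn; apply: leq_add; first by rewrite ltn_neqAle Hi H.
exact: leq_sum.
Qed.

Lemma exists_gap k (x s : pt k) : ple x s -> deg x < deg s ->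
  exists l, ple (addp x l) s.
Proof.
move=> /forallP H lt.
have [l Hl] : exists l, x l < s l.
  apply/existsP; apply: contraLR lt; rewrite negb_exists => /forallP Hx.
  rewrite -leqNgt; apply: leq_sum => i _; by rewrite leqNgt Hx.
exists l; apply/forallP => t; rewrite ffunE.
case: eqP => [->|_]; first by rewrite addn1.
by rewrite addn0.
Qed.

Lemma deg1 k (x : pt k) : deg x = 1 -> exists i, x = ev i.
Proof.
move=> d.
have [i Hi] : exists i, 0 < x i.
  apply/existsP; have [//|] := boolP [exists i, 0 < x i].
  rewrite negb_exists => /forallP Hx; exfalso.
  move: d; rewrite /deg big1 // => i _; apply/eqP; move: (Hx i); by rewrite lt0n negbK.
exists i; move: d; rewrite /deg (bigD1 i) //= => d.
have H0 : \sum_(j < k | j != i) x j = 0 by move: d Hi; set S := \sum_(j < k | j != i) x j; lia.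
have := H0; move/eqP; rewrite sum_nat_eq0 => /forallP H1.
apply/ffunP => t; rewrite ffunE.
case: eqP => [->|/eqP ne]; first by move: d; rewrite H0 addn0 => ->.
by move: (H1 t); rewrite ne /= => /eqP.
Qed.

Lemma below_socle k (lam : {fset pt k}) (x : pt k) : x \in lam ->
  exists2 s, s \in socle lam & ple x s.
Proof.
pose B := \max_(y <- enum_fset lam) deg y.
have HB : forall y, y \in lam -> deg y <= B.
  by move=> y Hy; apply: (@leq_bigmax_seq _ _ _ _ y).
move=> Hx; move: {2}(B - deg x) (leqnn (B - deg x)) => n.
elim: n x Hx => [|n IH] x Hx Hn.
all: have [Hs|Hs] := boolP (x \in socle lam); first by exists x => //; exact: ple_refl.
all: move: Hs; rewrite /socle !inE /= => /nandP [/negP H|]; first by exfalso; apply: H; exact: Hx.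
all: rewrite negb_forall => /existsP [y].
all: rewrite negb_imply => /andP [Hxy Hyx].
all: have Hy := fsvalP y.
all: have Hlt : deg x < deg (fsval y) by apply: ple_lt_deg Hxy _; rewrite eq_sym.
all: have := HB _ Hy.
- lia.
- move=> Hb; have [s Hs1 Hs2] := IH (fsval y) Hy ltac:(lia).
  by exists s => //; apply: ple_trans Hxy Hs2.
Qed.

Lemma in_lam_eq k (lam : {fset pt k}) i x :
  (x \in lam_eq lam i) = (x \in lam) && (deg x == i).
Proof. by rewrite /lam_eq !inE. Qed.

Lemma in_lam_ge k (lam : {fset pt k}) i x :
  (x \in lam_ge lam i) = (x \in lam) && (i <= deg x).
Proof. by rewrite /lam_ge !inE. Qed.

Lemma socle_sub k (lam : {fset pt k}) x : x \in socle lam -> x \in lam.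
Proof. by rewrite /socle !inE => /andP []. Qed.

Definition uu k (i j : 'I_k) : pt k := addp (ev i) j.

Lemma deg_uu k (i j : 'I_k) : deg (uu i j) = 2.
Proof. by rewrite /uu deg_addp deg_ev. Qed.

Lemma ple_uu1 k (i j l : 'I_k) : ple (uu i l) (addp (uu i j) l).
Proof. apply/forallP => t; rewrite !ffunE; lia. Qed.
Lemma ple_uu2 k (i j l : 'I_k) : ple (uu j l) (addp (uu i j) l).
Proof. apply/forallP => t; rewrite !ffunE; lia. Qed.
Lemma ple_uu3 k (i j : 'I_k) : ple (uu i i) (addp (uu i j) i).
Proof. apply/forallP => t; rewrite !ffunE; lia. Qed.
Lemma ple_uu4 k (i j : 'I_k) : ple (uu j j) (addp (uu i j) j).
Proof. apply/forallP => t; rewrite !ffunE; lia. Qed.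

Lemma uu_inj k (i j a b : 'I_k) : uu i a = uu j b -> i != j -> a = j.
Proof.
move=> /ffunP E ij; case: (a =P j) => // naj; exfalso.
have := E j; rewrite !ffunE eqxx (eq_sym j i) (negbTE ij).
have /negbTE -> : j != a by apply/eqP => e; apply: naj; rewrite e.
move=> /=; lia.
Qed.

Definition key k (i j : 'I_k) : nat := if (j <= i)%N then k + j else j.

Lemma key_lemma k (i j l : 'I_k) : i != j -> l != i -> l != j ->
  key i j <= key i l -> key j i <= key j l -> False.
Proof.
move=> /eqP ij /eqP li /eqP lj.
have ij' : (i : nat) <> j by move=> e; apply: ij; apply: val_inj.
have li' : (l : nat) <> i by move=> e; apply: li; apply: val_inj.
have lj' : (l : nat) <> j by move=> e; apply: lj; apply: val_inj.
have := ltn_ord i; have := ltn_ord j; have := ltn_ord l.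
rewrite /key; do 4 case: ifP => ?; lia.
Qed.

Theorem proposition4p2 (k q m : nat) :
  0 < k -> 0 < q -> 0 < m -> q < k ->
  forall lam : {fset pt k}, ~ is_M_partition k q m lam.
Proof.
move=> hk hq hm hqk lam [[Hcard Hdown] Hsoc H1 H2 H3].
have stepB : forall x, x \in lam -> deg x < 3 -> exists l, addp x l \in lam.
  move=> x Hx dx; have [s Hs Hxs] := below_socle Hx.
  have := (fsubsetP Hsoc) s Hs; rewrite in_lam_ge => /andP [Hsl ds].
  have [l Hl] := exists_gap Hxs (leq_trans dx ds).
  by exists l; apply: Hdown Hl.
have stepA : forall i, ev i \in lam.
  move=> i0; apply/negPn/negP => Hi0.
  pose s := enum_fset (lam_eq lam 1).
  have Hsub : {subset s <= [seq ev i | i <- enum 'I_k & ev i \in lam]}.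
    move=> x; rewrite in_lam_eq => /andP [Hx /eqP dx].
    have [i Ei] := deg1 dx; subst x.
    by apply: map_f; rewrite mem_filter Hx mem_enum.
  have := uniq_leq_size (fset_uniq _) Hsub.
  rewrite size_map size_filter.
  have : count (fun i => ev i \in lam) (enum 'I_k) < size (enum 'I_k).
    rewrite -[X in _ < X](count_predC (fun i => ev i \in lam)) -{1}[count _ _]addn0 ltn_add2l.
    by rewrite -has_count; apply/hasP; exists i0; rewrite ?mem_enum.
  rewrite size_enum_ord.
  have -> : size s = k by rewrite -[in RHS]H1.
  lia.
pose N i j := uu i j \in lam.
have Nsym : forall i j, N i j -> N j i.
  move=> i j; rewrite /N; congr (_ \in lam = true).
  by apply/ffunP => t; rewrite !ffunE addnC.
have exN : forall i, exists j, N i j.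
  move=> i; have [j Hj] := stepB _ (stepA i) ltac:(by rewrite deg_ev).
  by exists j.
have Hex : forall i, exists gi : 'I_k,
    (N i i /\ gi = i) \/
    (~~ N i i /\ gi != i /\ N i gi /\
       forall l, l != i -> N i l -> key i gi <= key i l).
  move=> i.
  have [Nii|Nii] := boolP (N i i); first by exists i; left.
  have [j Nij] := exN i.
  have Pj : (j != i) && N i j.
    rewrite Nij andbT; apply: contraNneq Nii => e; by rewrite -{2}e.
  case: (@arg_minnP _ j (fun l => (l != i) && N i l) (key i) Pj) => gi /andP [Pg1 Pg2] Hmin.
  exists gi; right; do 3 split => //.
  by move=> l Hl1 Hl2; apply: Hmin; rewrite Hl1.
have [g Hg] := fin_all_exists Hex.
pose f i := uu i (g i).
have f_inj : injective f.
  move=> i j E; apply/eqP/negPn/negP => ij.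
  have gij : g i = j := uu_inj E ij.
  have ji : j != i by rewrite eq_sym.
  have gji : g j = i := uu_inj (esym E) ji.
  case: (Hg i) => [[_ gii]|[Nii [_ [Nij mi]]]]; first by move: ij; rewrite -gij gii eqxx.
  case: (Hg j) => [[_ gjj]|[Njj [_ [Nji mj]]]]; first by move: ji; rewrite -gji gjj eqxx.
  rewrite gij in Nij mi; rewrite gji in Nji mj.
  have [l Hl] := stepB _ Nij ltac:(by rewrite deg_uu).
  have Nil : N i l by apply: Hdown Hl (ple_uu1 _ _ _).
  have Njl : N j l by apply: Hdown Hl (ple_uu2 _ _ _).
  have [li|li] := eqVneq l i.
    by subst l; move/negP: Nii; apply; exact: Hdown Hl (ple_uu3 _ _).
  have [lj|lj] := eqVneq l j.
    by subst l; move/negP: Njj; apply; exact: Hdown Hl (ple_uu4 _ _).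
  exact: (key_lemma ij li lj (mi l li Nil) (mj l lj Njl)).
have Hsub : {subset map f (enum 'I_k) <= enum_fset (lam_eq lam 2)}.
  move=> x /mapP [i _ ->]; rewrite /f in_lam_eq deg_uu eqxx andbT.
  by case: (Hg i) => [[Nii ->]|[_ [_ [Nig _]]]].
have Hu : uniq (map f (enum (ordinal k))) by rewrite map_inj_uniq // enum_uniq.
have := uniq_leq_size Hu Hsub.
rewrite size_map size_enum_ord.
have -> : size (enum_fset (lam_eq lam 2)) = q by rewrite -[in RHS]H2.
lia.
Qed.
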